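(* Fix integers $0\le p<q$. The span of the elements $\mathbf S^f$ of $\mathbf{EFSym}$ with $f:[n]\to[n]$ ($n\ge0$) satisfying $f^p=f^q$ (powers under composition) is a Hopf subalgebra of $\mathbf{EFSym}$. In particular, the $\mathbf S^f$ with $f$ idempotent span a Hopf subalgebra.
   Context: $\mathbf{EFSym}$: over $A=\{a_{ij}:i\ne j,\ i,j\ge1\}$ with $a_{ij}\prec a_{kl}$ iff $j=k$, for $f:[n]\to[n]$, $\mathbf S^f$ is the sum of words $w_1\cdots w_n$ over $A$ with $w_{f(j)}\prec w_j$ whenever $f(j)\ne j$; the $\mathbf S^f$ are linearly independent and span $\mathbf{EFSym}$, with product $\mathbf S^f\mathbf S^g=\mathbf S^{f\bullet g}$ (shifted concatenation: $i\mapsto f(i)$ for $i\le n$, $n+i\mapsto g(i)+n$) and coproduct $\Delta\mathbf S^f=\sum_{I\models f}\mathbf S^{\mathrm{std}(f^{[n]\setminus I})}\otimes\mathbf S^{\mathrm{std}(f^I)}$, where $I\models f$ means $f^{-1}(I)\subseteq I$, $f^I(x)=f(x)$ if $f(x)\in I$ and $x$ otherwise, and $\mathrm{std}$ conjugates by the increasing bijection $I\to[|I|]$. $f^0$ is the identity. *)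

(* Defs.v *)
From HB Require Import structures.
From mathcomp Require Import all_boot all_order all_algebra.
Set Implicit Arguments. Unset Strict Implicit. Unset Printing Implicit Defensive.
Import GRing.Theory.
Local Open Scope ring_scope.

(* An endofunction f : [n] -> [n] is encoded (0-based) as the sequence
   [:: f 0; ...; f (n-1)] of length n with all entries < n. *)
Definition endofun := seq nat.
Definition valid_ef (f : endofun) : bool := all (fun y => (y < size f)%N) f.
Definition app_ef (f : endofun) (x : nat) : nat := nth 0%N f x.

Definition pow_ef (k : nat) (f : endofun) (x : nat) : nat := iter k (app_ef f) x.
Definition pow_eq (p q : nat) (f : endofun) : bool :=
  all (fun x => pow_ef p f x == pow_ef q f x) (iota 0 (size f)).

Definition bullet (f g : endofun) : endofun := f ++ map (addn (size f)) g.

(* subsets I of [n] as bit masks of length n *)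
Fixpoint masks (n : nat) : seq bitseq :=
  if n is n'.+1 then [seq b :: m | b <- [:: false; true], m <- masks n'] else [:: [::]].
Definition inI (m : bitseq) (x : nat) : bool := nth false m x.
Definition models (m : bitseq) (f : endofun) : bool :=
  all (fun x => inI m (app_ef f x) ==> inI m x) (iota 0 (size f)).
(* the increasing bijection I -> [|I|] : y |-> #{ z in I | z < y } *)
Definition rank (m : bitseq) (y : nat) : nat := count id (take y m).
Definition std_restr (m : bitseq) (f : endofun) : endofun :=
  [seq rank m (if inI m (app_ef f x) then app_ef f x else x)
  | x <- mask m (iota 0 (size f))].

(* Delta S^f as a list of pairs (std f^{[n]\I}, std f^I), I |= f *)
Definition cop_basis (f : endofun) : seq (endofun * endofun) :=
  [seq (std_restr (map negb m) f, std_restr m f)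
  | m <- masks (size f) & models m f].

Section Alg.
Variable R : fieldType.

(* Elements of EFSym (resp. EFSym (x) EFSym) as formal R-linear combinations
   of basis elements S^f (resp. S^f (x) S^g). *)
Definition efsym := seq (R * endofun).
Definition efsym2 := seq (R * (endofun * endofun)).

Definition coef (x : efsym) (f : endofun) : R :=
  \sum_(c <- x) c.1 * (c.2 == f)%:R.
Definition coef2 (z : efsym2) (fg : endofun * endofun) : R :=
  \sum_(c <- z) c.1 * (c.2 == fg)%:R.

Definition scale (a : R) (x : efsym) : efsym := [seq (a * c.1, c.2) | c <- x].
Definition one_ef : efsym := [:: (1, [::])].
Definition mul_ef (x y : efsym) : efsym :=
  [seq (a.1 * b.1, bullet a.2 b.2) | a <- x, b <- y].
Definition comul_ef (x : efsym) : efsym2 :=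
  flatten [seq [seq (a.1, fg) | fg <- cop_basis a.2] | a <- x].
Definition counit_ef (x : efsym) : R :=
  \sum_(c <- x) c.1 * (size c.2 == 0)%N%:R.

(* Antipode on the basis, the unique map with m (S (x) id) Delta = eta epsilon:
   S(S^empty) = 1 and, for n > 0,
   S(S^f) = - sum_{I |= f, I nonempty} S(S^{std f^{[n]\I}}) S^{std f^I}.
   k is fuel (k > size f suffices). *)
Fixpoint antip_basis (k : nat) (f : endofun) : efsym :=
  if k is k'.+1 then
    if f is [::] then one_ef
    else scale (-1) (flatten
      [seq mul_ef (antip_basis k' (std_restr (map negb m) f)) [:: (1, std_restr m f)]
      | m <- masks (size f) & models m f && has id m])
  else [::].
Definition antipode_ef (x : efsym) : efsym :=
  flatten [seq scale a.1 (antip_basis (size a.2).+1 a.2) | a <- x].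

(* the span of {S^f | P f}: by linear independence of the S^f, x lies in it
   iff its support is contained in P *)
Definition in_span (P : pred endofun) (x : efsym) : Prop :=
  forall f, coef x f != 0 -> P f.
Definition in_span2 (P : pred endofun) (z : efsym2) : Prop :=
  forall fg, coef2 z fg != 0 -> P fg.1 /\ P fg.2.

Definition hopf_subalgebra (P : pred endofun) : Prop :=
  [/\ in_span P one_ef,
      forall x y, in_span P x -> in_span P y -> in_span P (mul_ef x y),
      forall x, in_span P x -> in_span2 P (comul_ef x)
    & forall x, in_span P x -> in_span P (antipode_ef x)].
End Alg.

(* Main.v *)
Require Import Defs.
From HB Require Import structures.
From mathcomp Require Import all_boot all_order all_algebra.
From Stdlib Require Import Classical.
Set Implicit Arguments. Unset Strict Implicit. Unset Printing Implicit Defensive.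

Definition PP p q (f : endofun) := valid_ef f && pow_eq p q f.

Lemma app_lt f x : valid_ef f -> x < size f -> app_ef f x < size f.
Proof. by move=> /allP v xl; apply: v; rewrite mem_nth. Qed.

Lemma iter_lt f x k : valid_ef f -> x < size f -> iter k (app_ef f) x < size f.
Proof. by move=> v xl; elim: k => //= k IH; apply: app_lt. Qed.

Lemma pow_eqP p q f : reflect (forall x, x < size f -> pow_ef p f x = pow_ef q f x) (pow_eq p q f).
Proof.
apply: (iffP allP) => H x.
  by move=> xl; apply/eqP/H; rewrite mem_iota.
by rewrite mem_iota => /andP [_ xl]; apply/eqP/H.
Qed.

Lemma app_bullet_l f g x : x < size f -> app_ef (bullet f g) x = app_ef f x.
Proof. by move=> xl; rewrite /app_ef /bullet nth_cat xl. Qed.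

Lemma app_bullet_r f g y : y < size g ->
  app_ef (bullet f g) (size f + y) = size f + app_ef g y.
Proof.
move=> yl; rewrite /app_ef /bullet nth_cat ltnNge leq_addr /=.
by rewrite addKn (nth_map 0).
Qed.

Lemma PP_bullet p q f g : PP p q f -> PP p q g -> PP p q (bullet f g).
Proof.
case/andP=> vf pf /andP [vg pg].
have sz : size (bullet f g) = size f + size g by rewrite size_cat size_map.
have itl : forall k x, x < size f -> iter k (app_ef (bullet f g)) x = iter k (app_ef f) x.
  move=> k x xl; elim: k => //= k ->; rewrite app_bullet_l //; exact: iter_lt.
have itr : forall k y, y < size g ->
    iter k (app_ef (bullet f g)) (size f + y) = size f + iter k (app_ef g) y.
  move=> k y yl; elim: k => //= k ->; rewrite app_bullet_r //; exact: iter_lt.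
apply/andP; split.
  rewrite /valid_ef sz /bullet all_cat; apply/andP; split.
    by apply/allP => y yf; move/allP: vf => /(_ y yf) /leq_trans; apply; rewrite leq_addr.
  by rewrite all_map; apply/allP => y yg /=; rewrite ltn_add2l; move/allP: vg; apply.
apply/pow_eqP => x; rewrite sz => xl.
case: (ltnP x (size f)) => xf.
  by rewrite /pow_ef !itl //; move/pow_eqP: pf; apply.
have -> : x = size f + (x - size f) by rewrite subnKC.
have yl : x - size f < size g by rewrite ltn_subLR.
by rewrite /pow_ef !itr //; congr (_ + _); move/pow_eqP: pg; apply.
Qed.

Lemma inI_lt m y : inI m y -> y < size m.
Proof. by rewrite /inI; case: ltnP => // h; rewrite nth_default. Qed.

Lemma rank_mask m k y : inI m y ->
  nth 0 (mask m (iota k (size m))) (rank m y) = y + k /\ rank m y < count id m.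
Proof.
elim: m k y => [|b m IH] k [|y] //=.
- by rewrite /inI /=; move=> ->; rewrite /rank /=.
- rewrite /inI /= => hy; have [h1 h2] := IH k.+1 y hy.
  rewrite /rank /= in h1 h2 *; case: b => /=.
    by rewrite h1 addnS.
  by rewrite h1 addnS.
Qed.

Lemma mask_rank m k i : i < count id m ->
  let y := nth 0 (mask m (iota k (size m))) i in
  k <= y /\ inI m (y - k) /\ rank m (y - k) = i.
Proof.
elim: m k i => [|b m IH] k i //=.
case: b => /=.
  case: i => [|i] /=.
    by move=> _; rewrite subnn.
  rewrite ltnS => il; have [h1 [h2 h3]] := IH k.+1 i il.
  set y := nth _ _ _ in h1 h2 h3 *.
  have e : y - k = (y - k.+1).+1 by rewrite subnS prednK // subn_gt0.
  split; first exact: ltnW.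
  rewrite e; split; first exact: h2.
  by rewrite /rank /=; rewrite /rank in h3; rewrite h3.
move=> il; have [h1 [h2 h3]] := IH k.+1 i il.
set y := nth _ _ _ in h1 h2 h3 *.
have e : y - k = (y - k.+1).+1 by rewrite subnS prednK // subn_gt0.
split; first exact: ltnW.
rewrite e; split; first exact: h2.
by rewrite /rank /=; rewrite /rank in h3; rewrite h3.
Qed.

Lemma std_P p q m h : (forall y, inI m y -> inI m (h y)) ->
  let S := [seq rank m (h x) | x <- mask m (iota 0 (size m))] in
  valid_ef S /\ ((forall y, inI m y -> iter p h y = iter q h y) -> pow_eq p q S).
Proof.
move=> hI S.
have szM : size (mask m (iota 0 (size m))) = count id m by rewrite size_mask // size_iota.
have szS : size S = count id m by rewrite size_map.
have itS : forall k y, inI m y -> iter k (app_ef S) (rank m y) = rank m (iter k h y).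
  move=> k y yI; elim: k => //= k IHk; rewrite IHk.
  have zI : inI m (iter k h y) by elim: k {IHk} => //= k IH; apply: hI.
  have [h1 h2] := rank_mask 0 zI.
  by rewrite /app_ef (nth_map 0) ?szM // h1 addn0.
split.
  rewrite /valid_ef; apply/(all_nthP 0) => i; rewrite szS => il.
  have [_ [h2 _]] := mask_rank 0 il; rewrite subn0 in h2.
  rewrite (nth_map 0) ?szM //.
  by have [_ ] := rank_mask 0 (hI _ h2).
move=> Hpq; apply/pow_eqP => i; rewrite szS => il.
have [_ [h2 h3]] := mask_rank 0 il; rewrite subn0 in h2 h3.
by rewrite /pow_ef -h3 !itS // Hpq.
Qed.

Lemma fwd m f x : valid_ef f -> models m f -> size m = size f ->
  x < size f -> ~~ inI m x -> ~~ inI m (app_ef f x).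
Proof.
move=> v /allP M sz xl; apply: contra => h.
by move: (M x); rewrite mem_iota xl => /(_ isT) /implyP; apply.
Qed.

Lemma inI_negb m y : inI (map negb m) y = (y < size m) && ~~ inI m y.
Proof.
rewrite /inI; case: ltnP => yl /=.
  by rewrite (nth_map false).
by rewrite nth_default ?size_map.
Qed.

Lemma compl_case p q m f : valid_ef f -> models m f -> size m = size f -> pow_eq p q f ->
  forall y, inI (map negb m) y ->
  iter p (fun x => if inI (map negb m) (app_ef f x) then app_ef f x else x) y =
  iter q (fun x => if inI (map negb m) (app_ef f x) then app_ef f x else x) y.
Proof.
move=> v M sz pe y; rewrite inI_negb => /andP [yl yn].
rewrite sz in yl.
have H : forall k, iter k (fun x => if inI (map negb m) (app_ef f x) then app_ef f x else x) y
   = iter k (app_ef f) y /\ ~~ inI m (iter k (app_ef f) y).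
  elim=> [|k [IH1 IH2]] /=; first by split.
  rewrite IH1.
  have l := iter_lt k v yl.
  have n2 := fwd v M sz l IH2.
  by rewrite inI_negb sz (app_lt v l) n2.
rewrite (proj1 (H p)) (proj1 (H q)).
by move/pow_eqP: pe; apply.
Qed.




Lemma I_case p q m f : p < q -> valid_ef f -> models m f -> size m = size f -> pow_eq p q f ->
  forall x, inI m x ->
  iter p (fun y => if inI m (app_ef f y) then app_ef f y else y) x =
  iter q (fun y => if inI m (app_ef f y) then app_ef f y else y) x.
Proof.
move=> pq v M sz pe x xI.
set h := fun y => _.
set F := app_ef f.
have xl : x < size f by rewrite -sz; apply: inI_lt.
have eqpq : iter q F x = iter p F x.
  by symmetry; move/pow_eqP: pe; apply.
have per : forall c, iter (c * (q - p) + p) F x = iter p F x.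
  elim=> [|c IH]; first by [].
  rewrite mulSn -addnA iterD IH -iterD subnK; last exact: ltnW.
  exact: eqpq.
case: (classic (exists j, ~~ inI m (iter j F x))) => [ex|nex].
  case: (ex_minnP ex) => t1 Nt Mt.
  have t1p : 0 < t1 by case: t1 Nt {Mt} => //=; rewrite xI.
  have inb : forall j, j < t1 -> inI m (iter j F x).
    by move=> j jl; apply/negPn/negP => /Mt; rewrite leqNgt jl.
  have A : forall k, k <= t1.-1 -> iter k h x = iter k F x.
    elim=> [|k IH]; first by [].
    move=> kl; rewrite iterS IH; last exact: ltnW.
    by rewrite /h -/F -iterS inb // (leq_ltn_trans kl) // prednK.
  have B : forall d, iter (d + t1.-1) h x = iter t1.-1 F x.
    elim=> [|d IH]; first by rewrite add0n A.
    rewrite addSn iterS IH /h -/F -iterS prednK //.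
    by rewrite (negbTE Nt).
  have fw : forall e, ~~ inI m (iter (e + t1) F x).
    elim=> [|e IH] //; rewrite addSn iterS.
    by apply: fwd => //; apply: iter_lt.
  have t1le : t1 <= p.
    rewrite leqNgt; apply/negP => pt.
    have := fw (t1 * (q - p) + p - t1).
    rewrite subnK; last by rewrite (leq_trans _ (leq_addr _ _)) // leq_pmulr // subn_gt0.
    by rewrite per inb.
  have -> : p = (p - t1.-1) + t1.-1 by rewrite subnK // (leq_trans (leq_pred _)).
  have -> : q = (q - t1.-1) + t1.-1.
    by rewrite subnK // (leq_trans (leq_pred _)) // (leq_trans t1le) // ltnW.
  by rewrite !B.
have allI : forall j, inI m (iter j F x).
  by move=> j; apply/negPn/negP => hj; apply: nex; exists j.
have C : forall k, iter k h x = iter k F x.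
  by elim=> [|k IH] //=; rewrite IH /h -/F -iterS allI.
by rewrite !C eqpq.
Qed.

Lemma masks_size n m : m \in masks n -> size m = n.
Proof.
elim: n m => [|n IH] m /=; first by rewrite inE => /eqP ->.
rewrite !mem_cat => /or3P [] //.
- by case/mapP => m' /IH <- ->.
- by case/mapP => m' /IH <- ->.
Qed.

Lemma PP_std p q m f : p < q -> PP p q f -> size m = size f -> models m f ->
  PP p q (std_restr m f) /\ PP p q (std_restr (map negb m) f).
Proof.
move=> pq /andP [v pe] sz M; split.
  have hI : forall y, inI m y -> inI m (if inI m (app_ef f y) then app_ef f y else y).
    by move=> y; case: ifP.
  have [h1 h2] := std_P p q hI.
  rewrite /std_restr -sz; apply/andP; split => //.
  apply: h2; exact: I_case.
have hI : forall y, inI (map negb m) y ->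
    inI (map negb m) (if inI (map negb m) (app_ef f y) then app_ef f y else y).
  by move=> y; case: ifP.
have [h1 h2] := std_P p q hI.
have sz' : size f = size (map negb m) by rewrite size_map.
rewrite /std_restr sz'; apply/andP; split => //.
apply: h2; exact: compl_case.
Qed.

Lemma cop_PP p q f fg : p < q -> PP p q f -> fg \in cop_basis f -> PP p q fg.1 && PP p q fg.2.
Proof.
move=> pq Pf /mapP [m]; rewrite mem_filter => /andP [M mm] -> /=.
have [h1 h2] := PP_std pq Pf (masks_size mm) M.
by rewrite h1 h2.
Qed.

Import GRing.Theory.
Section A.
Local Open Scope ring_scope.
Variable R : fieldType.
Definition cf (B : eqType) (x : seq (R * B)) (b : B) : R := \sum_(c <- x) c.1 * (c.2 == b)%:R.

Lemma regroup (A : eqType) (x : seq (R * A)) (H : A -> R) :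
  \sum_(a <- x) a.1 * H a.2 =
  \sum_(f <- undup (map snd x)) cf x f * H f.
Proof.
under [RHS]eq_bigr => f _ do rewrite /cf big_distrl /=.
rewrite exchange_big /= [LHS]big_seq [RHS]big_seq; apply: eq_bigr => c cx.
have cin : c.2 \in undup (map snd x).
  by rewrite mem_undup; apply/mapP; exists c.
rewrite (bigD1_seq c.2) ?undup_uniq //= eqxx mulr1 big1 ?addr0 // => f /negbTE.
by rewrite eq_sym => ->; rewrite mulr0 mul0r.
Qed.

Lemma sum_nz (A : eqType) (x : seq (R * A)) (H : A -> R) :
  \sum_(a <- x) a.1 * H a.2 != 0 -> exists f, cf x f != 0 /\ H f != 0.
Proof.
rewrite regroup => nz.
have : has (fun f => (cf x f != 0) && (H f != 0)) (undup (map snd x)).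
  apply/negPn/negP => /hasPn hn; move/negP: nz; apply; apply/eqP.
  rewrite big_seq big1 // => f /hn; rewrite negb_and !negbK.
  by case/orP=> /eqP ->; rewrite ?mul0r ?mulr0.
by case/hasP => f _ /andP [a b]; exists f.
Qed.

Lemma cf_flatten (B : eqType) (L : seq (seq (R * B))) b :
  cf (flatten L) b = \sum_(z <- L) cf z b.
Proof. by rewrite /cf big_flatten. Qed.

Lemma cf_scale (B : eqType) (a : R) (x : seq (R * B)) b :
  cf [seq (a * c.1, c.2) | c <- x] b = a * cf x b.
Proof. by rewrite /cf big_map big_distrr; apply: eq_bigr => c _ /=; rewrite mulrA. Qed.

Lemma cf_lin (A B : eqType) (x : seq (R * A)) (T : A -> seq (R * B)) (P : pred B) :
  (forall f, cf x f != 0 -> forall b, cf (T f) b != 0 -> P b) ->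
  forall b, cf (flatten [seq [seq (a.1 * c.1, c.2) | c <- T a.2] | a <- x]) b != 0 -> P b.
Proof.
move=> H b; rewrite cf_flatten big_map.
under eq_bigr => a _ do rewrite cf_scale.
by case/(sum_nz (H := fun f => cf (T f) b)) => f [h1 h2]; apply: (H f).
Qed.


Lemma sum_nz0 (A : eqType) (L : seq A) (G : A -> R) :
  \sum_(z <- L) G z != 0 -> exists2 z, z \in L & G z != 0.
Proof.
move=> nz.
have : has (fun z => G z != 0) L.
  apply/negPn/negP => /hasPn hn; move/negP: nz; apply; apply/eqP.
  by rewrite big_seq big1 // => z /hn; rewrite negbK => /eqP.
by case/hasP => z zL gz; exists z.
Qed.

Lemma one_span (p q : nat) : forall f, cf (one_ef R) f != 0 -> PP p q f.
Proof.
move=> f; rewrite /cf big_cons big_nil /= addr0 mul1r.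
by case: (@eqP _ [::] f) => [<- | _]; last by rewrite eqxx.
Qed.

Lemma mul_closed (p q : nat) (x y : efsym R) :
  (forall f, cf x f != 0 -> PP p q f) -> (forall f, cf y f != 0 -> PP p q f) ->
  forall h, cf (mul_ef x y) h != 0 -> PP p q h.
Proof.
move=> Hx Hy h.
have -> : mul_ef x y = flatten [seq [seq (a.1 * c.1, c.2) | c <- [seq (b.1, bullet a.2 b.2) | b <- y]] | a <- x].
  by rewrite /mul_ef; congr flatten; apply: eq_map => a; rewrite -map_comp.
apply: (cf_lin (T := fun f => [seq (b.1, bullet f b.2) | b <- y])) => f xf h' /=.
rewrite /cf big_map.
case/(sum_nz (H := fun g => (bullet f g == h')%:R)) => g [yg].
case: (@eqP _ (bullet f g) h') => [<- _ | _]; last by rewrite eqxx.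
by apply: PP_bullet; [apply: Hx | apply: Hy].
Qed.

Lemma antip_closed (p q k : nat) : (p < q)%N -> forall f, PP p q f ->
  forall h, cf (antip_basis R k f) h != 0 -> PP p q h.
Proof.
move=> pq; elim: k => [|k IH] f Pf h /=.
  by rewrite /cf big_nil eqxx.
case: f Pf => [|a f] Pf; first exact: one_span.
rewrite (cf_scale (-1)) mulN1r oppr_eq0 cf_flatten.
case/sum_nz0 => z /mapP [m]; rewrite mem_filter => /andP [/andP [M _] mm] -> {z}.
have [h1 h2] := PP_std pq Pf (masks_size mm) M.
apply: mul_closed; first exact: IH.
move=> g; rewrite /cf big_cons big_nil /= addr0 mul1r.
by case: (@eqP _ (std_restr m (a :: f)) g) => [<- | _]; last by rewrite eqxx.
Qed.

Lemma comul_closed (p q : nat) (x : efsym R) : (p < q)%N ->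
  (forall f, cf x f != 0 -> PP p q f) ->
  forall fg, cf (comul_ef x) fg != 0 -> PP p q fg.1 && PP p q fg.2.
Proof.
move=> pq Hx fg.
have -> : comul_ef x = flatten [seq [seq (a.1 * c.1, c.2) | c <- [seq (1, g) | g <- cop_basis a.2]] | a <- x].
  rewrite /comul_ef; congr flatten; apply: eq_map => a; rewrite -map_comp.
  by apply: eq_map => g /=; rewrite mulr1.
apply: (cf_lin (T := fun f => [seq (1, g) | g <- cop_basis f]) (P := fun fg => PP p q fg.1 && PP p q fg.2)) => f xf b /=.
rewrite /cf big_map => /sum_nz0 [g gL]; rewrite /= mul1r.
case: (@eqP _ g b) => [<- _ | _]; last by rewrite eqxx.
exact: cop_PP pq (Hx f xf) gL.
Qed.

Lemma antipode_closed (p q : nat) (x : efsym R) : (p < q)%N ->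
  (forall f, cf x f != 0 -> PP p q f) ->
  forall h, cf (antipode_ef x) h != 0 -> PP p q h.
Proof.
move=> pq Hx h.
change (cf (flatten [seq [seq (a.1 * c.1, c.2) | c <- antip_basis R (size a.2).+1 a.2] | a <- x]) h != 0 -> PP p q h).
apply: (cf_lin (T := fun f => antip_basis R (size f).+1 f)) => f xf b.
exact: antip_closed pq f (Hx f xf) b.
Qed.
End A.

Unset Implicit Arguments.

Theorem mainTheorem15 (R : fieldType) (p q : nat) :
  (p < q)%N ->
  hopf_subalgebra R (fun f => valid_ef f && pow_eq p q f).
Proof.
move=> pq; split.
- move=> f; exact (@one_span R p q f).
- move=> x y Hx Hy; exact (@mul_closed R p q x y Hx Hy).
- move=> x Hx fg nz.
  have := @comul_closed R p q x pq Hx fg nz.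
  by case/andP.
- move=> x Hx; exact (@antipode_closed R p q x pq Hx).
Qed.
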